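(* Let $R$ be a DT ring. Then the factor ring $R/J(R)$ is reduced (has no nonzero nilpotent elements).
   Context: All rings are associative with identity; $J(R)$ is the Jacobson radical, $U(R)$ the group of units. $\Delta(R)=\{x\in R: x+u\in U(R)\text{ for all }u\in U(R)\}$. $\mathrm{Tr}(R)=\{x\in R: x^3=x\}$. A ring $R$ is a DT ring if every $r\in R$ can be written $r=e+d$ with $e\in\mathrm{Tr}(R)$ and $d\in\Delta(R)$. *)

(* Defs.v *)
From mathcomp Require Import all_boot all_algebra.
Set Implicit Arguments. Unset Strict Implicit. Unset Printing Implicit Defensive.
Import GRing.Theory.
Local Open Scope ring_scope.

Definition in_Delta (R : unitRingType) (x : R) : Prop :=
  forall u : R, u \is a GRing.unit -> (x + u) \is a GRing.unit.

Definition tripotent (R : unitRingType) (x : R) : Prop := x ^+ 3 = x.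

Definition DT_ring (R : unitRingType) : Prop :=
  forall r : R, exists e d : R, [/\ tripotent e, in_Delta d & r = e + d].

(* Jacobson radical J(R), elementwise: x in J(R) iff 1 - r x is a unit
   for every r in R (equivalently, x lies in every maximal left ideal). *)
Definition in_Jacobson (R : unitRingType) (x : R) : Prop :=
  forall r : R, (1 - r * x) \is a GRing.unit.

(* Main.v *)
Require Import Defs.
From mathcomp Require Import all_boot all_algebra.
Import GRing.Theory.
Local Open Scope ring_scope.

Section S.
Variable R : unitRingType.
Implicit Types a b d x y : R.

Lemma swap_unit a b : (1 - a * b) \is a GRing.unit -> (1 - b * a) \is a GRing.unit.
Proof.
move=> /unitrP [X [HX1 HX2]]; apply/unitrP; exists (1 + b * X * a); split.
- rewrite mulrDl mul1r.
  have -> : b * X * a * (1 - b * a) = b * a.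
    rewrite mulrBr mulr1 -!mulrA -mulrBr; congr (_ * _); rewrite -mulrBr.
    have -> : a - a * (b * a) = (1 - a * b) * a by rewrite mulrBl mul1r mulrA.
    by rewrite mulrA HX1 mul1r.
  by rewrite subrK.
- rewrite mulrDr mulr1.
  have -> : (1 - b * a) * (b * X * a) = b * a.
    rewrite mulrBl mul1r -!mulrA -mulrBr; congr (_ * _).
    have -> : X * a - a * (b * (X * a)) = (1 - a * b) * X * a.
      by rewrite !mulrBl mul1r !mulrA.
    by rewrite HX2 mul1r.
  by rewrite subrK.
Qed.

Lemma D_neg d : in_Delta d -> in_Delta (- d).
Proof.
move=> Hd u Hu; rewrite -unitrN opprD opprK; apply: Hd; by rewrite unitrN.
Qed.

Lemma D_mulr d u : in_Delta d -> u \is a GRing.unit -> in_Delta (d * u).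
Proof.
move=> Hd Hu w Hw.
have -> : d * u + w = (d + w * u^-1) * u by rewrite mulrDl -mulrA mulVr // mulr1.
rewrite unitrMl //; apply: Hd; by rewrite unitrMl // unitrV.
Qed.

Lemma D_mull u d : in_Delta d -> u \is a GRing.unit -> in_Delta (u * d).
Proof.
move=> Hd Hu w Hw.
have -> : u * d + w = u * (d + u^-1 * w) by rewrite mulrDr mulrA divrr // mul1r.
rewrite unitrMr //; apply: Hd; by rewrite unitrMr // unitrV.
Qed.

Lemma D_1p d : in_Delta d -> (1 + d) \is a GRing.unit.
Proof. by move=> Hd; rewrite addrC; apply: Hd; rewrite unitr1. Qed.

Lemma D_prod d1 d2 : in_Delta d1 -> in_Delta d2 -> (1 - d1 * d2) \is a GRing.unit.
Proof.
move=> H1 H2.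
have -> : 1 - d1 * d2 = - (d1 * (1 + d2)) + (1 + d1).
  by rewrite mulrDr mulr1 opprD [RHS]addrC addrA addrK.
exact: (D_neg _ (D_mulr _ _ H1 (D_1p _ H2)) _ (D_1p _ H1)).
Qed.

Lemma sqz_unit (n : R) : n * n = 0 -> (1 + n) \is a GRing.unit.
Proof.
move=> Hn; apply/unitrP; exists (1 - n); split.
- by rewrite mulrDr mulr1 mulrBl mul1r Hn subr0 subrK.
- by rewrite mulrBr mulr1 mulrDl mul1r Hn addr0 addrK.
Qed.

Lemma addl (x y z : R) : x - (z + (x - y)) = y - z.
Proof. by rewrite opprD opprB addrCA [x + _]addrC subrK addrC. Qed.

Lemma idem_unit (f e : R) : f * f = f -> in_Delta e -> (1 - f * e * f) \is a GRing.unit.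
Proof.
move=> Hf He.
have fg : f * (1 - f) = 0 by rewrite mulrBr mulr1 Hf subrr.
have gf : (1 - f) * f = 0 by rewrite mulrBl mul1r Hf subrr.
have gg : (1 - f) * (1 - f) = 1 - f by rewrite mulrBr mulr1 gf subr0.
set A := f * e * f - f.
have fA : f * A = A by rewrite /A mulrBr Hf !mulrA Hf.
have Af : A * f = A by rewrite /A mulrBl Hf -!mulrA Hf.
have gA : (1 - f) * A = 0 by rewrite -fA mulrA gf mul0r.
have Ag : A * (1 - f) = 0 by rewrite -Af -mulrA fg mulr0.
pose n1 := (1 - f) * (e * f).
have n1n1 : n1 * n1 = 0.
  by rewrite /n1 -mulrA (mulrA (e*f)) -(mulrA e) fg mulr0 mul0r mulr0.
pose n2 := (f * e) * (1 - f).
have n2n2 : n2 * n2 = 0.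
  by rewrite /n2 -mulrA (mulrA (1 - f)) (mulrA (1 - f) f) gf !mul0r mulr0.
have U1 : (- (1 + n1)) \is a GRing.unit by rewrite unitrN sqz_unit.
have U2 : (- (1 + n2)) \is a GRing.unit by rewrite unitrN sqz_unit.
move/unitrP: (He _ U1) => [N [HN _]].
move/unitrP: (He _ U2) => [N2 [_ HN2]].
have HM1 : (e + - (1 + n1)) * f = A.
  rewrite mulrDl mulNr mulrDl mul1r /n1 -!mulrA Hf mulrBl mul1r /A -mulrA.
  exact: addl.
have HM2 : f * (e + - (1 + n2)) = A.
  rewrite mulrDr mulrN mulrDr mulr1 /n2 !mulrA Hf mulrBr mulr1 /A.
  exact: addl.
have NA : N * A = f by rewrite -HM1 mulrA HN mul1r.
have AN2 : A * N2 = f by rewrite -HM2 -mulrA HN2 mulr1.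
set B := N * f.
have BE : B = f * N2 by rewrite /B -[in LHS]AN2 mulrA NA.
have fB : B * (1 - f) = 0 by rewrite /B -mulrA fg mulr0.
have gB : (1 - f) * B = 0 by rewrite BE mulrA gf mul0r.
have fB2 : f * B = B by rewrite BE mulrA Hf.
have AB : A * B = f by rewrite BE mulrA Af AN2.
have BA : B * A = f by rewrite /B -mulrA fA NA.
have -> : 1 - f * e * f = (1 - f) - A by rewrite /A opprB addrA subrK.
clearbody A B.
apply/unitrP; exists ((1 - f) - B); split.
- by rewrite mulrBr !mulrBl !mul1r fg fA fB BA subrr !subr0 sub0r opprK subrK.
- by rewrite mulrBr !mulrBl !mul1r fg fB2 Ag AB subrr !subr0 sub0r opprK subrK.
Qed.

Lemma Delta_J (hDT : DT_ring R) d : in_Delta d -> in_Jacobson d.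
Proof.
move=> Hd r; have [e [d' [He Hd' ->]]] := hDT r.
have e3 : e * (e * e) = e by rewrite -[RHS]He !exprS expr0 mulr1.
pose f := e * e.
have ff : f * f = f by rewrite /f mulrA -(mulrA e e e) e3.
have fe : f * e = e by rewrite /f -mulrA e3.
have ef : e * f = e by rewrite /f e3.
pose v := e + (1 - f).
have vv : v * v = 1.
  by rewrite /v mulrDl !mulrDr !mulrN !mulr1 !mulrBl !mul1r fe ff ef -/f !subrr oppr0 !addr0 !add0r addrC subrK.
have vU : v \is a GRing.unit by apply/unitrP; exists v; split; exact: vv.
have efv : e = f * v by rewrite /v mulrDr mulrBr mulr1 fe ff subrr addr0.
have dv : in_Delta (v * d) by apply: D_mull.
have X1 : (1 - f * (v * d)) \is a GRing.unit.
  have := swap_unit _ _ (idem_unit _ _ ff dv); by rewrite mulrA ff.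
set X := 1 - e * d.
have XU : X \is a GRing.unit by rewrite /X efv -mulrA.
have -> : 1 - (e + d') * d = X * (1 - (X^-1 * d') * d).
  by rewrite mulrBr mulr1 !mulrA divrr // mul1r /X mulrDl opprD addrA.
rewrite unitrMr //; apply: D_prod => //; apply: D_mull => //; by rewrite unitrV.
Qed.

Lemma J_add x y : in_Jacobson x -> in_Jacobson y -> in_Jacobson (x + y).
Proof.
move=> Hx Hy r; have XU := Hx r.
have -> : 1 - r * (x + y) = (1 - r * x) * (1 - ((1 - r * x)^-1 * r) * y).
  by rewrite mulrBr mulr1 !mulrA divrr // mul1r mulrDr opprD addrA.
by rewrite unitrMr.
Qed.

Lemma J_neg x : in_Jacobson x -> in_Jacobson (- x).
Proof. by move=> Hx r; rewrite mulrN -mulNr. Qed.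

Lemma J_mull b x : in_Jacobson x -> in_Jacobson (b * x).
Proof. by move=> Hx r; rewrite mulrA. Qed.

Lemma J_mulr x b : in_Jacobson x -> in_Jacobson (x * b).
Proof.
move=> Hx r; rewrite mulrA; apply: swap_unit; rewrite mulrA; exact: Hx.
Qed.

Lemma J_sq (hDT : DT_ring R) a : in_Jacobson (a * a) -> in_Jacobson a.
Proof.
move=> Ha; have [e [d [He Hd Ea]]] := hDT a.
have dJ := Delta_J hDT _ Hd.
have e3 : e * (e * e) = e by rewrite -[RHS]He !exprS expr0 mulr1.
have Ee : e = a - d by rewrite Ea addrK.
have eeJ : in_Jacobson (e * e).
  rewrite Ee mulrBr !mulrBl.
  apply: J_add; first by apply: J_add => //; apply: J_neg; exact: J_mulr.
  by apply: J_neg; apply: J_add; [exact: J_mull | apply: J_neg; exact: J_mull].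
rewrite Ea; apply: J_add => //; rewrite -e3; exact: J_mull.
Qed.

End S.

Theorem lemma4p2 (R : unitRingType) (hDT : DT_ring R) :
  forall (x : R) (n : nat), in_Jacobson (x ^+ n) -> in_Jacobson x.
Proof.
move=> x n; elim: n => [|n IH] H.
  by have := H 1; rewrite expr0 mulr1 subrr unitr0.
case: n IH H => [|n] IH H; first by rewrite expr1 in H.
apply: IH; apply: (J_sq _ hDT).
have -> : x ^+ n.+1 * x ^+ n.+1 = x ^+ n * x ^+ n.+2.
  by rewrite -!exprD !addnS !addSn.
exact: J_mull.
Qed.
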